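(* Let $\Omega$ be a distribution of $\Sigma$, $\mathsf{Obs}$ an observation function over $\Sigma$, and $(\sigma_N,P)\in\mathit{CED}(\Omega,\mathsf{Obs})$. (1) For every discrepancy $\delta\in\mathcal D(\sigma_N,P)$ and every $\sigma\in\mathsf{img}(P)$, $\sigma_N|_\delta\ne\sigma|_\delta$. Consequently there is no function $P':\Omega\cup\{\delta\}\to\mathsf{Dom}(\mathsf{Obs})$ extending $P$ with $P'(\delta)\in\mathsf{img}(P)$ such that $(\sigma_N,P')\in\mathit{CED}(\Omega\cup\{\delta\},\mathsf{Obs})$. (2) Conversely, let $\Omega'$ be any distribution of $\Sigma$ such that no $\delta\in\mathcal D(\sigma_N,P)$ is contained in any $\Sigma_j\in\Omega'$. Then for every $\Sigma_j\in\Omega'$ there is $\sigma\in\mathsf{img}(P)$ with $\sigma_N|_{\Sigma_j}=\sigma|_{\Sigma_j}$; hence there exists $P'':\Omega'\to\mathsf{img}(P)$ with $(\sigma_N,P'')\in\mathit{CED}(\Omega',\mathsf{Obs})$.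
   Context: $\sigma|_{\Sigma'}$ is the projection of a word onto $\Sigma'$ (subsequence of symbols in $\Sigma'$). A distribution of $\Sigma$ is a finite set of subsets of $\Sigma$ with union $\Sigma$. An observation function is a partial map $\mathsf{Obs}:\Sigma^\star\rightharpoonup\{+,-\}$ with finite domain. A counter-example to $\Omega\models\mathsf{Obs}$ is a pair $(\sigma_N,P)$ with $\sigma_N\in\mathsf{Dom}(\mathsf{Obs})$, $\mathsf{Obs}(\sigma_N)=-$, and $P:\Omega\to\mathsf{Dom}(\mathsf{Obs})$ such that for all $\Sigma_i\in\Omega$, $\mathsf{Obs}(P(\Sigma_i))=+$ and $\sigma_N|_{\Sigma_i}=P(\Sigma_i)|_{\Sigma_i}$; $\mathit{CED}(\Omega,\mathsf{Obs})$ is the set of these, and $\mathsf{img}(P)$ is the image of $P$. Discrepancies: for a word $w$ let $\Sigma^m(w)$ be the multiset of its symbols. For $\Sigma_i\in\Omega$, the multiplicity discrepancies are $\mathcal D_m^{\Sigma_i}(\sigma_N,P)=\{a\in\Sigma\mid a$ occurs a different number of times in $\sigma_N$ and in $P(\Sigma_i)\}$. Let $\theta=\Sigma\setminus\mathcal D_m^{\Sigma_i}(\sigma_N,P)$, $u=\sigma_N|_\theta$, $w=P(\Sigma_i)|_\theta$ (these are permutations of each other); let $\pi$ be the unique bijection of positions with $u[j]=w[\pi(j)]$ for all $j$ and such that $j<k$, $u[j]=u[k]$ imply $\pi(j)<\pi(k)$. The order discrepancies are $\mathcal D_o^{\Sigma_i}(\sigma_N,P)=\{\{u[j],u[k]\}\mid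 j<k,\ \pi(j)>\pi(k)\}$. A set $\delta\subseteq\Sigma$ is a discrepancy for $(\sigma_N,P)$ iff for every $\Sigma_i\in\Omega$, either $\delta\cap\mathcal D_m^{\Sigma_i}(\sigma_N,P)\neq\emptyset$ or some element of $\mathcal D_o^{\Sigma_i}(\sigma_N,P)$ is a subset of $\delta$; $\mathcal D(\sigma_N,P)$ is the set of all discrepancies. *)

(* Defs.v *)
From mathcomp Require Import all_boot finmap.
Set Implicit Arguments. Unset Strict Implicit. Unset Printing Implicit Defensive.
Local Open Scope fmap_scope.

Section Defs.
Variable Sigma : finType.

Definition proj (A : {set Sigma}) (w : seq Sigma) : seq Sigma :=
  [seq x <- w | x \in A].

Definition is_distribution (Omega : {set {set Sigma}}) : Prop :=
  \bigcup_(S in Omega) S = [set: Sigma].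

(* Observation functions: finite partial maps words -> {+,-}; true = +, false = - *)
Definition obs_fun := {fmap seq Sigma -> bool}.

Definition img (Omega : {set {set Sigma}}) (P : {set Sigma} -> seq Sigma)
  (s : seq Sigma) : Prop := exists2 Si, Si \in Omega & P Si = s.

(* (sN, P) \in CED(Omega, Obs); P is only relevant on Omega *)
Definition is_ced (Omega : {set {set Sigma}}) (Obs : obs_fun) (sN : seq Sigma)
  (P : {set Sigma} -> seq Sigma) : Prop :=
  Obs.[? sN] = Some false /\
  forall Si, Si \in Omega ->
    Obs.[? P Si] = Some true /\ proj Si sN = proj Si (P Si).

Definition Dm (sN w : seq Sigma) : {set Sigma} :=
  [set a | count_mem a sN != count_mem a w].

(* position (0-based) in w of the k-th (0-based) occurrence of a *)
Fixpoint occ_pos (a : Sigma) (k : nat) (w : seq Sigma) : nat :=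
  match w with
  | [::] => 0
  | x :: w' => if x == a then (if k is k'.+1 then (occ_pos a k' w').+1 else 0)
               else (occ_pos a k w').+1
  end.

(* pi(j) for position j of u carrying letter a: the position in w of the
   occurrence of a with the same rank as u[j] among occurrences of a in u *)
Definition pi_at (a : Sigma) (u w : seq Sigma) (j : nat) : nat :=
  occ_pos a (count_mem a (take j u)) w.

Definition order_disc (u w : seq Sigma) (a b : Sigma) : Prop :=
  exists j k, [/\ j < k, k < size u, nth a u j = a, nth b u k = b &
                 pi_at b u w k < pi_at a u w j].

Definition is_discrepancy (Omega : {set {set Sigma}}) (sN : seq Sigma)
  (P : {set Sigma} -> seq Sigma) (delta : {set Sigma}) : Prop :=
  forall Si, Si \in Omega ->
    let theta := ~: Dm sN (P Si) in
    (delta :&: Dm sN (P Si) != set0) \/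
    (exists a b, [/\ a \in delta, b \in delta &
                   order_disc (proj theta sN) (proj theta (P Si)) a b]).

End Defs.

(* Main.v *)
Require Import Defs.
From mathcomp Require Import all_boot finmap.
Set Implicit Arguments. Unset Strict Implicit.

Section L.
Variable Sigma : finType.
Implicit Types (t : seq Sigma) (a b x : Sigma).

Lemma occ_O1 a r t x0 : r < count_mem a t ->
  [/\ occ_pos a r t < size t, nth x0 t (occ_pos a r t) = a &
      count_mem a (take (occ_pos a r t) t) = r].
Proof.
elim: t r => [|x t IH] r //=.
case: (eqVneq x a) => [->|nxa] /=.
  case: r => [|r] /=; first by rewrite ?eqxx.
  idtac.
  rewrite add1n ltnS => /IH [h1 h2 h3]; by rewrite eqxx h3.
rewrite add0n => /IH [h1 h2 h3]; by rewrite h2 h3 (negbTE nxa).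
Qed.

Lemma occ_O2 a j t x0 : j < size t -> nth x0 t j = a ->
  occ_pos a (count_mem a (take j t)) t = j.
Proof.
elim: t j => [|x t IH] j //=.
case: j => [|j] /=; first by move=> _ <-; rewrite eqxx.
rewrite ltnS => hj hn; case: (eqVneq x a) => _ /=; by rewrite add0n IH.
Qed.

Lemma occ_O4 (A : {set Sigma}) a b ra rb t : a \in A -> b \in A ->
  (occ_pos b rb t < occ_pos a ra t) =
  (occ_pos b rb [seq x <- t | x \in A] < occ_pos a ra [seq x <- t | x \in A]).
Proof.
move=> aA bA; elim: t ra rb => [|x t IH] ra rb //=.
case xA: (x \in A) => /=.
  case: (x == a); case: (x == b); case: ra => [|ra]; case: rb => [|rb] //=;
   by rewrite ?ltnS IH.
have -> : (x == a) = false by apply/negbTE; apply: contraFN xA => /eqP ->.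
have -> : (x == b) = false by apply/negbTE; apply: contraFN xA => /eqP ->.
by rewrite ltnS IH.
Qed.

Lemma occ_P5 z1 z2 : (forall x, count_mem x z1 = count_mem x z2) -> z1 <> z2 ->
  exists a ra b rb, [/\ ra < count_mem a z1, rb < count_mem b z1,
    occ_pos a ra z1 < occ_pos b rb z1 & occ_pos b rb z2 < occ_pos a ra z2].
Proof.
elim: z1 z2 => [|x z1 IH] [|y z2] hc hne //.
- by move: (hc y) => /=; rewrite eqxx.
- by move: (hc x) => /=; rewrite eqxx.
case: (eqVneq x y) => [exy|nxy].
  subst y.
  have hc' : forall a, count_mem a z1 = count_mem a z2.
    by move=> a; move: (hc a) => /= /eqP; rewrite eqn_add2l => /eqP.
  have hne' : z1 <> z2 by move=> e; apply: hne; rewrite e.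
  have [a [ra [b [rb [h1 h2 h3 h4]]]]] := IH z2 hc' hne'.
  exists a, ((x == a) + ra), b, ((x == b) + rb); split => /=.
  + by rewrite ltn_add2l.
  + by rewrite ltn_add2l.
  + by case: (x == a); case: (x == b) => /=; rewrite ?add1n ?add0n ltnS.
  + by case: (x == a); case: (x == b) => /=; rewrite ?add1n ?add0n ltnS.
exists x, 0, y, 0; split => /=.
+ by rewrite eqxx.
+ move: (hc y) => /=; rewrite eqxx add1n => ->; by [].
+ by rewrite eqxx (negbTE nxy).
+ by rewrite eqxx eq_sym (negbTE nxy).
Qed.

Lemma count_projE (A : {set Sigma}) x s :
  count_mem x (proj A s) = if x \in A then count_mem x s else 0.
Proof.
rewrite /proj count_filter; case: ifP => xA.
  by apply: eq_count => y /=; case: (eqVneq y x) => // ->.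
by apply/eqP; rewrite -leqn0 leqNgt -has_count; apply/hasP => -[y _ /= /andP [/eqP -> ]]; rewrite xA.
Qed.

Lemma proj_comm (A B : {set Sigma}) s : proj A (proj B s) = proj B (proj A s).
Proof. by rewrite /proj -!filter_predI; apply: eq_filter => y /=; rewrite andbC. Qed.

Lemma proj_sub (A B : {set Sigma}) s : A \subset B -> proj A (proj B s) = proj A s.
Proof.
move=> /subsetP AB; rewrite /proj -filter_predI; apply: eq_filter => y /=.
by case yA: (y \in A); rewrite //= AB.
Qed.

Lemma L1 (delta : {set Sigma}) sN w :
  let theta := ~: Dm sN w in
  (delta :&: Dm sN w != set0) \/
  (exists a b, [/\ a \in delta, b \in delta &
                 order_disc (proj theta sN) (proj theta w) a b]) ->
  proj delta sN <> proj delta w.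
Proof.
move=> theta [h|[a [b [ad bd [j [k [jk ku nj nk hp]]]]]]] e.
  case/set0Pn: h => a /setIP [ad]; rewrite inE => /negP; apply.
  have := count_projE delta a sN; rewrite e count_projE ad => ->//.

set u := proj theta sN in nj nk hp ku; set v := proj theta w in hp.
have e' : proj delta u = proj delta v by rewrite /u /v proj_comm e proj_comm.
have hj : occ_pos a (count_mem a (take j u)) u = j := occ_O2 (ltn_trans jk ku) nj.
have hk : occ_pos b (count_mem b (take k u)) u = k := occ_O2 ku nk.
move: e'; rewrite /proj => e'. move: hp; rewrite /pi_at (occ_O4 _ _ _ ad bd) -e' -(occ_O4 _ _ _ ad bd) hj hk.
by rewrite ltnNge ltnW.
Qed.

Lemma L2 (A : {set Sigma}) sN w :
  proj A sN <> proj A w ->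
  let theta := ~: Dm sN w in
  (A :&: Dm sN w != set0) \/
  (exists a b, [/\ a \in A, b \in A &
                 order_disc (proj theta sN) (proj theta w) a b]).
Proof.
move=> ne theta; case: (boolP (A :&: Dm sN w != set0)) => h; [by left|right].
move: h; rewrite negbK => /eqP h0.
have hA : forall x, x \in A -> count_mem x sN = count_mem x w.
  move=> x xA; apply/eqP; apply: contraT => hx.
  have : x \in A :&: Dm sN w by rewrite inE xA inE hx.
  by rewrite h0 inE.
have Ath : A \subset theta.
  apply/subsetP => x xA; rewrite inE inE negbK; apply/eqP; exact: hA.
have hc : forall x, count_mem x (proj A sN) = count_mem x (proj A w).
  by move=> x; rewrite !count_projE; case: ifP => // /hA.
have [a [ra [b [rb [h1 h2 h3 h4]]]]] := occ_P5 hc ne.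
have aA : a \in A by move: h1; rewrite count_projE; case: ifP.
have bA : b \in A by move: h2; rewrite count_projE; case: ifP.
set u := proj theta sN; set v := proj theta w.
move: h1 h2 h3 h4; rewrite -(proj_sub sN Ath) -(proj_sub w Ath) -/u -/v.
rewrite -(occ_O4 _ _ _ aA bA) -(occ_O4 _ _ _ bA aA) => h1 h2 h3 h4.
have cu : forall x, x \in A -> count_mem x (proj A u) = count_mem x u.
  by move=> x xA; rewrite count_projE xA.
rewrite cu // in h1; rewrite cu // in h2.
have [j1 j2 j3] := occ_O1 a h1.
have [k1 k2 k3] := occ_O1 b h2.
exists a, b; split => //.
exists (occ_pos a ra u), (occ_pos b rb u); split => //.
by rewrite /pi_at j3 k3.
Qed.
End L.

Unset Implicit Arguments.
Theorem mainTheorem8 (Sigma : finType) (Omega : {set {set Sigma}})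
  (Obs : obs_fun Sigma) (sN : seq Sigma) (P : {set Sigma} -> seq Sigma) :
  is_distribution Omega ->
  is_ced Omega Obs sN P ->
  (* (1) *)
  ((forall delta : {set Sigma}, is_discrepancy Omega sN P delta ->
      (forall sigma, img Omega P sigma -> proj delta sN <> proj delta sigma) /\
      ~ (exists P' : {set Sigma} -> seq Sigma,
           [/\ (forall Si, Si \in Omega -> P' Si = P Si),
               img Omega P (P' delta) &
               is_ced (delta |: Omega) Obs sN P']))
  /\
  (* (2) *)
  (forall Omega' : {set {set Sigma}}, is_distribution Omega' ->
     (forall delta : {set Sigma}, is_discrepancy Omega sN P delta ->
        forall Sj, Sj \in Omega' -> ~~ (delta \subset Sj)) ->
     (forall Sj, Sj \in Omega' ->
        exists2 sigma, img Omega P sigma & proj Sj sN = proj Sj sigma) /\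
     (exists P'' : {set Sigma} -> seq Sigma,
        (forall Sj, Sj \in Omega' -> img Omega P (P'' Sj)) /\
        is_ced Omega' Obs sN P''))).
Proof.
move=> _ [hN hP]; split.
  move=> delta hd.
  have H1 : forall sigma, img Omega P sigma -> proj delta sN <> proj delta sigma.
    by move=> s [Si hSi <-]; apply: L1; exact: hd Si hSi.
  split => //; case=> P' [hext himg [_ hc]].
  have [_ e] := hc delta (setU11 _ _).
  exact: H1 _ himg e.
move=> O' _ hno.
have H2 : forall Sj, Sj \in O' ->
    [pick Si in Omega | proj Sj sN == proj Sj (P Si)] != None.
  move=> Sj hSj; case: pickP => // hnone.
  have hd : is_discrepancy Omega sN P Sj.
    move=> Si hSi; apply: L2; move: (hnone Si) => /=; rewrite hSi /=.
    by move/negbT/eqP.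
  by have := hno Sj hd Sj hSj; rewrite subxx.
have H3 : forall Sj, Sj \in O' -> exists2 Si, Si \in Omega &
   [pick Si in Omega | proj Sj sN == proj Sj (P Si)] = Some Si /\
   proj Sj sN = proj Sj (P Si).
  move=> Sj hSj; move: (H2 Sj hSj); case: pickP => // Si /andP [h1 /eqP h2] _.
  by exists Si.
split.
  move=> Sj hSj; have [Si h1 [_ h2]] := H3 Sj hSj.
  by exists (P Si) => //; exists Si.
exists (fun Sj => P (odflt set0 [pick Si in Omega | proj Sj sN == proj Sj (P Si)])).
split.
  move=> Sj hSj; have [Si h1 [-> _]] := H3 Sj hSj; by exists Si.
split => // Sj hSj; have [Si h1 [-> h2]] := H3 Sj hSj => /=.
by split => //; apply: (proj1 (hP Si h1)).
Qed.
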